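(* Let $q \ge 2$, $n$ and $t$ be positive integers with $t \le 10\sqrt{n}$. For every integer $k\ge 0$ with $2k+2\le n$, \[ W_q(n,t, 2k+2) \leq W_q(n,t, 2k+1) \le 2\left(\frac{q^2t}{(q-1)n}\right)^{k} W_q(n,t,1) \le 2\left(\frac{q^2t}{(q-1)n}\right)^{k+1}V_q(n,t). \]
   Context: $V_q(m,r) = \sum_{j=0}^{r}\binom{m}{j}(q-1)^j$ (with $V_q(m,r)=0$ for $r<0$). For $x\in[q]^n$, $B_q(x,r)=\{y\in[q]^n : d(x,y)\le r\}$, where $d$ is the Hamming distance. For $0\le k\le n$, $W_q(n,t,k)$ denotes $|B_q(x,t)\cap B_q(y,t)|$ for any $x,y\in[q]^n$ with $d(x,y)=k$ (this does not depend on the choice of $x,y$). *)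

(* Defs.v *)
From mathcomp Require Import all_boot all_order all_algebra.
Set Implicit Arguments. Unset Strict Implicit. Unset Printing Implicit Defensive.

Definition word (q n : nat) := {ffun 'I_n -> 'I_q}.

Definition hdist (q n : nat) (x y : word q n) : nat := #|[set i | x i != y i]|.

Definition Vq (q m r : nat) : nat := \sum_(0 <= j < r.+1) 'C(m, j) * (q - 1) ^ j.

Definition ball_inter (q n t : nat) (x y : word q n) : nat :=
  #|[set z : word q n | (hdist x z <= t) && (hdist y z <= t)]|.

(* W_q(n,t,k): the intersection size for some (any) pair x,y with d(x,y)=k;
   the paper notes this does not depend on the choice.  If no such pair exists,
   we set it to 0 (never happens for k <= n, q >= 2). *)
Definition Wq (q n t k : nat) : nat :=
  match [pick p : word q n * word q n | hdist p.1 p.2 == k] with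
  | Some p => ball_inter t p.1 p.2
  | None => 0
  end.

(* Main.v *)
Require Import Defs.
From mathcomp Require Import all_boot all_order all_algebra.
From mathcomp Require Import all_fingroup zify.
Import Order.TTheory GRing.Theory Num.Theory.
Set Implicit Arguments. Unset Strict Implicit. Unset Printing Implicit Defensive.


Section Split.
Variables (q m N : nat).

Definition lft (z : word q (m + N)) : word q m := [ffun i => z (lshift N i)].
Definition rgt (z : word q (m + N)) : word q N := [ffun i => z (rshift m i)].
Definition wcat (L : word q m) (Rw : word q N) : word q (m + N) :=
  [ffun i => match split i with inl a => L a | inr b => Rw b end].

Lemma lft_cat L Rw : lft (wcat L Rw) = L.
Proof. by apply/ffunP=> i; rewrite !ffunE (unsplitK (inl _ i)). Qed.
Lemma rgt_cat L Rw : rgt (wcat L Rw) = Rw.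
Proof. by apply/ffunP=> i; rewrite !ffunE (unsplitK (inr _ i)). Qed.
Lemma cat_lr z : wcat (lft z) (rgt z) = z.
Proof. by apply/ffunP=> i; rewrite !ffunE; case: split_ordP => j ->; rewrite ffunE. Qed.

Lemma hdist_sum n' (x y : word q n') : hdist x y = \sum_(i < n') (x i != y i).
Proof. by rewrite /hdist -sum1dep_card big_mkcond. Qed.

Lemma hdist_split x y : hdist x y = hdist (lft x) (lft y) + hdist (rgt x) (rgt y).
Proof.
by rewrite !hdist_sum big_split_ord; congr (_ + _); apply: eq_bigr => i _; rewrite !ffunE.
Qed.

Lemma card_split (P : pred (word q m)) (Q : pred (word q N)) :
  #|[set z | P (lft z) && Q (rgt z)]| = #|[set L | P L]| * #|[set Rw | Q Rw]|.
Proof.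
rewrite -cardsX -(card_imset _ (f := fun p : word q m * word q N => wcat p.1 p.2)); last first.
  move=> [a b] [c d] /= E.
  by have := congr1 (fun w => lft w) E; have := congr1 (fun w => rgt w) E; rewrite !lft_cat !rgt_cat => -> ->.
apply: eq_card => z; rewrite inE; apply/idP/imsetP.
  by move=> Hz; exists (lft z, rgt z); rewrite ?inE ?cat_lr //.
by move=> [[a b]]; rewrite !inE /= => /andP[Ha Hb] ->; rewrite lft_cat rgt_cat Ha Hb.
Qed.

End Split.


Lemma hdist0 q n (x y : word q n) : hdist x y = 0 -> x = y.
Proof.
move/cards0_eq => E; apply/ffunP=> i; apply/eqP; apply: contraT => H.
have Hi : i \in [set i | x i != y i] by rewrite inE.
by rewrite E inE in Hi.
Qed.

Lemma hdist_le q n (x y : word q n) : hdist x y <= n.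
Proof. by rewrite /hdist -[X in _ <= X]card_ord max_card. Qed.

Lemma hdistC q n (x y : word q n) : hdist x y = hdist y x.
Proof. by rewrite /hdist; apply: eq_card => i; rewrite !inE eq_sym. Qed.

Lemma hdistxx q n (x : word q n) : hdist x x = 0.
Proof. by rewrite /hdist; apply/eqP; rewrite cards_eq0; apply/eqP/setP => i; rewrite !inE eqxx. Qed.

Lemma Vq0 q s : Vq q 0 s = 1.
Proof.
rewrite /Vq big_nat_recl // bin0 expn0 muln1 big1_seq ?addn0 // => j _.
Qed.

Lemma VqS0 q N : Vq q N 0 = 1.
Proof. by rewrite /Vq big_nat1 bin0 expn0. Qed.

Lemma VqSS q N s : Vq q N.+1 s.+1 = Vq q N s.+1 + (q - 1) * Vq q N s.
Proof.
rewrite /Vq big_nat_recl // [in X in _ = X + _]big_nat_recl // !bin0 -addnA; congr (_ + _).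
rewrite big_distrr /= -big_split /=; apply: eq_bigr => j _.
by rewrite binS mulnDl expnS; congr (_ + _); rewrite mulnCA.
Qed.

Lemma card_word q n : #|word q n| = q ^ n.
Proof. by rewrite card_ffun !card_ord. Qed.

Lemma ball_card q N s (c : word q N) : #|[set w | hdist c w <= s]| = Vq q N s.
Proof.
elim: N s c => [|N IH] s c.
  rewrite Vq0 -(cards1 c); apply: eq_card => w; rewrite !inE.
  have -> : w = c by apply/ffunP => -[].
  by rewrite eqxx hdistxx.
change (word q (1 + N)) in c.
change (#|[set w : word q (1 + N) | hdist c w <= s]| = Vq q N.+1 s).
have Hs : forall w : word q (1 + N), hdist c w = hdist (lft c) (lft w) + hdist (rgt c) (rgt w).
  by move=> w; apply: hdist_split.
rewrite -(cardsID [set w : word q (1 + N) | lft w == lft c]).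
have -> : [set w | hdist c w <= s] :&: [set w : word q (1 + N) | lft w == lft c] =
          [set w | (fun L => L == lft c) (lft w) && (fun Rw => hdist (rgt c) Rw <= s) (rgt w)].
  apply/setP => w; rewrite !inE Hs; case: (eqVneq (lft w) (lft c)) => [->|Hne];
    by rewrite ?hdistxx ?eqxx ?andbT ?andbF ?andTb ?andFb.
have -> : [set w | hdist c w <= s] :\: [set w : word q (1 + N) | lft w == lft c] =
          [set w | (fun L => L != lft c) (lft w) && (fun Rw => hdist (rgt c) Rw < s) (rgt w)].
  apply/setP => w; rewrite !inE Hs; case: (eqVneq (lft w) (lft c)) => [->|Hne];
    rewrite ?hdistxx ?eqxx ?andbT ?andbF ?andTb ?andFb //.
  have -> : hdist (lft c) (lft w) = 1.
    apply/eqP; rewrite eqn_leq hdist_le lt0n; apply/eqP => /hdist0 E.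
    by move: Hne; rewrite E eqxx.
  by rewrite add1n.
rewrite (card_split (fun L => L == lft c) (fun Rw => hdist (rgt c) Rw <= s)) (card_split (fun L => L != lft c) (fun Rw => hdist (rgt c) Rw < s)).
have -> : #|[set L : word q 1 | L == lft c]| = 1.
  by apply: etrans (cards1 (lft c)); apply: eq_card => L; rewrite !inE.
have -> : #|[set L : word q 1 | L != lft c]| = q - 1.
  by transitivity #|[set~ lft c]|; [apply: eq_card => L; rewrite !inE | rewrite cardsC1 card_word expn1 subn1].
case: s => [|s].
  rewrite VqS0 mul1n.
  have -> : #|[set Rw | hdist (rgt c) Rw < 0]| = 0 by apply/eqP; rewrite cards_eq0; apply/eqP/setP.
  by rewrite muln0 addn0 IH VqS0.
rewrite VqSS mul1n !IH; congr (_ + _); congr (_ * _).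
Qed.


Lemma perm_match (T : finType) (A B : {set T}) : #|A| = #|B| ->
  exists s : {perm T}, forall i, (s i \in A) = (i \in B).
Proof.
elim: {A}_.+1 {-2}A (ltnSn #|A :\: B|) => // K IH A HK HAB.
case: (set_0Vmem (A :\: B)) => [E0|[a Ha]].
  have EAB : A = B.
    apply/eqP; rewrite eqEcard -setD_eq0 E0 eqxx HAB leqnn //.
  by exists 1%g => i; rewrite perm1 EAB.
have HBA : 0 < #|B :\: A|.
  have h1 := cardsID B A; have h2 := cardsID A B.
  rewrite setIC in h2; have : 0 < #|A :\: B| by apply/card_gt0P; exists a.
  by move: h1 h2; rewrite HAB; lia.
case/card_gt0P: HBA => b Hb.
move: Ha Hb; rewrite !inE => /andP[HaB HaA] /andP[HbA HbB].
set A' := tperm a b @^-1: A.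
have HA' : #|A'| = #|B| by rewrite card_preimset ?HAB //; apply: perm_inj.
have Hsub : A' :\: B \subset (A :\: B) :\ a.
  apply/subsetP => j; rewrite !inE => /andP[HjB].
  case: tpermP => [Hj|Hj|/eqP Hja /eqP Hjb].
  - by rewrite (negbTE HbA).
  - by rewrite Hj HbB in HjB.
  - by move=> ->; rewrite HjB Hja.
have Hlt : #|A' :\: B| < K.
  apply: leq_ltn_trans (subset_leq_card Hsub) _.
  move: HK; rewrite (cardsD1 a (A :\: B)) !inE HaB HaA /=; lia.
have [s' Hs'] := IH A' Hlt HA'.
exists (s' * tperm a b)%g => i; rewrite permM -Hs' !inE.
by rewrite -{1}(tpermK a b (s' i)) ?tpermK.
Qed.

Section Inv.
Variables (q n t : nat) (x y x' y' : word q n).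
Hypothesis Hd : hdist x y = hdist x' y'.

Lemma ball_inter_inv : ball_inter t x y = ball_inter t x' y'.
Proof.
have [s Hs] := perm_match Hd.
pose b1 i := tperm (x (s i)) (x' i) (y (s i)).
pose pi i := (tperm (x (s i)) (x' i) * tperm (b1 i) (y' i))%g.
pose phi (z : word q n) : word q n := [ffun i => pi i (z (s i))].
have Hphi : forall z w, hdist (phi z) (phi w) = hdist z w.
  move=> z w; rewrite /hdist -[RHS](card_preimset _ (@perm_inj _ s)).
  by apply: eq_card => i; rewrite !inE !ffunE (inj_eq perm_inj).
have phi_inj : injective phi.
  by move=> z w E; apply: hdist0; rewrite -Hphi E hdistxx.
have Hx : phi x = x'.
  apply/ffunP => i; rewrite ffunE permM tpermL.
  have := Hs i; rewrite !inE.
  case: (eqVneq (x' i) (y' i)) => [Exy|Nxy] /=.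
    move/negbFE/eqP => E; rewrite /b1 -E tpermL Exy; exact: tpermL.
  move=> E; rewrite tpermD //; last by rewrite eq_sym.
  apply/eqP => E2; move: E2; rewrite /b1 -{2}(tpermL (x (s i)) (x' i)) => /perm_inj E2.
  by rewrite E2 eqxx in E.
have Hy : phi y = y'.
  by apply/ffunP => i; rewrite ffunE permM -/(b1 i) tpermL.
rewrite /ball_inter -[RHS](card_preimset _ phi_inj).
by apply: eq_card => z; rewrite !inE -{1}Hx -{1}Hy !Hphi.
Qed.
End Inv.


Lemma hdist_tri q n (x y z : word q n) : hdist x y <= hdist x z + hdist z y.
Proof.
rewrite /hdist; set A := [set i | x i != z i]; set B := [set i | z i != y i].
apply: (@leq_trans #|A :|: B|).
  apply: subset_leq_card; apply/subsetP => i; rewrite !inE.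
  by case: (eqVneq (x i) (z i)) => [->|].
by have := cardsUI A B; lia.
Qed.

Lemma Wq_eq q n t m (x y : word q n) : hdist x y = m -> Wq q n t m = ball_inter t x y.
Proof.
move=> Hxy; rewrite /Wq; case: pickP => [p /eqP Hp|Hn].
  by apply: ball_inter_inv; rewrite Hp Hxy.
by have := Hn (x, y); rewrite /= Hxy eqxx.
Qed.

Section SplitBounds.
Variables (q m N t : nat) (x y : word q (m + N)).
Hypotheses (HR : rgt x = rgt y) (HL : hdist (lft x) (lft y) = m).

Lemma inter_core z : hdist x z <= t -> hdist y z <= t ->
  m + 2 * hdist (rgt x) (rgt z) <= 2 * t.
Proof.
rewrite !hdist_split -HR => h1 h2.
have := hdist_tri (lft x) (lft y) (lft z); have := hdistC (lft z) (lft y); rewrite HL => h4 h3; lia.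
Qed.

Lemma inter_upper s : (forall h, m + 2 * h <= 2 * t -> h <= s) ->
  ball_inter t x y <= q ^ m * Vq q N s.
Proof.
move=> Hs; rewrite -card_word -(ball_card s (rgt x)) -cardsT.
rewrite -(card_split (fun _ => true) (fun Rw => hdist (rgt x) Rw <= s)).
apply: subset_leq_card; apply/subsetP => z; rewrite !inE => /andP[h1 h2].
by apply: Hs; apply: inter_core.
Qed.

Lemma inter_empty : 2 * t < m -> ball_inter t x y = 0.
Proof.
move=> H; apply/eqP; rewrite cards_eq0; apply/eqP/setP => z; rewrite !inE.
apply/negbTE/negP => /andP[h1 h2]; have := inter_core h1 h2; lia.
Qed.

Lemma inter_lower s : m + s <= t -> q ^ m * Vq q N s <= ball_inter t x y.
Proof.
move=> Hs; rewrite -card_word -(ball_card s (rgt x)) -cardsT.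
rewrite -(card_split (fun _ => true) (fun Rw => hdist (rgt x) Rw <= s)).
apply: subset_leq_card; apply/subsetP => z; rewrite !inE /= => h.
rewrite !hdist_split -HR.
have := hdist_le (lft x) (lft z); have := hdist_le (lft y) (lft z).
by move=> h1 h2; apply/andP; split; lia.
Qed.

End SplitBounds.

Lemma canon_pair q m N : 1 < q -> exists x y : word q (m + N),
  [/\ rgt x = rgt y, hdist (lft x) (lft y) = m & hdist x y = m].
Proof.
move=> Hq.
pose a0 : 'I_q := Ordinal (ltnW Hq). pose a1 : 'I_q := Ordinal Hq.
pose x : word q (m + N) := [ffun _ => a0].
pose y : word q (m + N) := wcat [ffun _ => a1] [ffun _ => a0].
have HR : rgt x = rgt y by rewrite rgt_cat; apply/ffunP => i; rewrite !ffunE.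
have HL : hdist (lft x) (lft y) = m.
  rewrite lft_cat /hdist -[RHS](card_ord m); apply: eq_card => i; rewrite !inE !ffunE //.
exists x, y; split => //.
by rewrite hdist_split HL HR hdistxx addn0.
Qed.


Section Mono.
Variables (q n t : nat) (i : 'I_n).

Definition rst (u v : word q n) := #|[set j | (j != i) && (u j != v j)]|.

Lemma hdist_D1 u v : hdist u v = (u i != v i) + rst u v.
Proof.
rewrite /hdist (cardsD1 i) inE; congr (_ + _); apply: eq_card => j; rewrite !inE //.
Qed.

Lemma rst_eq (u u' v v' : word q n) : (forall j, j != i -> u j = u' j) -> (forall j, j != i -> v j = v' j) ->
  rst u v = rst u' v'.
Proof.
move=> Hu Hv; apply: eq_card => j; rewrite !inE.
by case: (eqVneq j i) => //= Hj; rewrite Hu ?Hv.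
Qed.

Lemma rst_le u v : rst u v <= hdist u v.
Proof. by rewrite hdist_D1 leq_addl. Qed.

Variables (x y : word q n).
Hypothesis Hi : x i != y i.
Let y' : word q n := [ffun j => if j == i then x i else y j].

Lemma hdist_y' : hdist x y = (hdist x y').+1.
Proof.
rewrite !hdist_D1 (negbTE Hi) ffunE eqxx eqxx add1n add0n; congr _.+1.
by apply: rst_eq => // j Hj; rewrite ffunE (negbTE Hj).
Qed.

Lemma inter_mono : ball_inter t x y <= ball_inter t x y'.
Proof.
pose sw (z : word q n) : word q n := [ffun j => if j == i then tperm (x i) (y i) (z j) else z j].
have rsw : forall u z, rst u (sw z) = rst u z.
  by move=> u z; apply: rst_eq => // j Hj; rewrite ffunE (negbTE Hj).
have ry' : forall z, rst y' z = rst y z.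
  by move=> z; apply: rst_eq => // j Hj; rewrite ffunE (negbTE Hj).
have swi : forall z, sw z i = tperm (x i) (y i) (z i) by move=> z; rewrite ffunE eqxx.
pose f z := if hdist y' z <= t then z else sw z.
set S := [set z | (hdist x z <= t) && (hdist y z <= t)].
have key : forall z, z \in S -> ~~ (hdist y' z <= t) ->
    [/\ y i = z i, rst y z = t & rst x z <= t].
  move=> z; rewrite inE => /andP[h1 h2] h3.
  move: h1 h2 h3; rewrite !hdist_D1 ry' ffunE eqxx.
  have := rst_le x z; rewrite hdist_D1.
  case: (eqVneq (y i) (z i)) => Eyz; case: (eqVneq (x i) (z i)) => Exz /= h0 h1 h2 h3.
  - by move: Hi; rewrite Eyz Exz eqxx.
  - by split => //; lia.
  - exfalso; lia.
  - exfalso; lia.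
rewrite /ball_inter -/S -(card_in_imset (f := f)); last first.
  move=> z w Hz Hw; rewrite /f.
  case: ifPn => Hz'; case: ifPn => Hw'.
  - by [].
  - move=> E; have [Ew1 Ew2 Ew3] := key w Hw Hw'.
    have Hi' : y i != x i by rewrite eq_sym.
    move: Hz; rewrite inE E => /andP[_]; rewrite hdist_D1 rsw swi -Ew1 tpermR Hi' Ew2; lia.
  - move=> E; have [Ez1 Ez2 Ez3] := key z Hz Hz'.
    have Hi' : y i != x i by rewrite eq_sym.
    move: Hw; rewrite inE -E => /andP[_]; rewrite hdist_D1 rsw swi -Ez1 tpermR Hi' Ez2; lia.
  - move=> E; apply/ffunP => j; have := congr1 (fun u : word q n => u j) E; rewrite !ffunE.
    by case: eqP => _ //; apply: perm_inj.
apply: subset_leq_card; apply/subsetP => _ /imsetP[z Hz ->]; rewrite /f; case: ifPn => Hz'.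
  by move: Hz; rewrite !inE => /andP[h1 _]; rewrite h1 Hz'.
have [E1 E2 E3] := key z Hz Hz'; rewrite inE; apply/andP; split.
  by rewrite hdist_D1 rsw swi -E1 tpermR eqxx /=.
by rewrite hdist_D1 rsw ry' swi -E1 tpermR ffunE eqxx eqxx /= E2.
Qed.
End Mono.


Lemma Wmono q n t m : 1 < q -> m.+1 <= n -> Wq q n t m.+1 <= Wq q n t m.
Proof.
move=> Hq Hmn; have [N ->] : exists N, n = m.+1 + N by exists (n - m.+1); rewrite subnKC.
have [x [y [_ _ Hxy]]] := canon_pair m.+1 N Hq.
have : 0 < hdist x y by rewrite Hxy.
rewrite /hdist => /card_gt0P[i]; rewrite inE => Hi.
have Hy' : hdist x [ffun j => if j == i then x i else y j] = m.
  by have := hdist_y' Hi; rewrite Hxy => -[].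
rewrite (Wq_eq t Hxy) (Wq_eq t Hy').
exact: inter_mono.
Qed.

Lemma Wmono_le q n t m m' : 1 < q -> m <= m' -> m' <= n -> Wq q n t m' <= Wq q n t m.
Proof.
move=> Hq; elim: m' => [|m' IH]; first by rewrite leqn0 => /eqP ->.
rewrite leq_eqVlt => /orP[/eqP -> //|Hm] Hn.
by apply: leq_trans (Wmono t Hq Hn) (IH Hm (ltnW Hn)).
Qed.

Lemma W1_eq q n t : 1 < q -> 0 < n -> 0 < t -> Wq q n t 1 = q * Vq q (n - 1) (t - 1).
Proof.
move=> Hq Hn Ht; have [N ->] : exists N, n = 1 + N by exists (n - 1); rewrite subnKC.
have [x [y [HR HL Hxy]]] := canon_pair 1 N Hq.
rewrite (Wq_eq t Hxy) addKn -[q in q * _]expn1; apply/eqP; rewrite eqn_leq.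
rewrite (inter_upper HR HL) ?(inter_lower HR HL) //; try lia.
Qed.

Lemma Wup q n t k : 1 < q -> 2 * k + 1 <= n ->
  Wq q n t (2 * k + 1) <= q ^ (2 * k + 1) * Vq q (n - (2 * k + 1)) (t - k - 1).
Proof.
move=> Hq Hn; have [N ->] : exists N, n = 2 * k + 1 + N by exists (n - (2 * k + 1)); rewrite subnKC.
have [x [y [HR HL Hxy]]] := canon_pair (2 * k + 1) N Hq.
rewrite (Wq_eq t Hxy) addKn; apply: (inter_upper HR HL) => h; lia.
Qed.

Lemma Wzero q n t m : 1 < q -> 2 * t < m -> m <= n -> Wq q n t m = 0.
Proof.
move=> Hq Hm Hn; have [N ->] : exists N, n = m + N by exists (n - m); rewrite subnKC.
have [x [y [HR HL Hxy]]] := canon_pair m N Hq.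
by rewrite (Wq_eq t Hxy) (inter_empty HR HL).
Qed.


Lemma bin_step n t a b : n * a.+1 <= t * b.+1 -> n * 'C(b, a) <= t * 'C(b.+2, a.+1).
Proof.
move=> H.
have E1 := mul_bin_diag b.+2 a.
have E2 := mul_bin_down b.+1 a.
rewrite /= in E1 E2.
rewrite -(@leq_pmul2l (b.+2 * b.+1)) //.
have -> : b.+2 * b.+1 * (n * 'C(b, a)) = n * a.+1 * (b.+1 - a) * 'C(b.+2, a.+1).
  move: E1 E2; set d := b.+1 - a; set C0 := 'C(b, a); set C1 := 'C(b.+1, a); set C2 := 'C(b.+2, a.+1).
  move=> E1 E2.
  have -> : b.+2 * b.+1 * (n * C0) = n * b.+2 * (b.+1 * C0) by nia.
  rewrite E2.
  have -> : n * b.+2 * (d * C1) = n * d * (b.+2 * C1) by nia.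
  rewrite E1; nia.
have : b.+1 - a <= b.+2 by rewrite leq_subLR; lia.
move=> H2.
move: H H2; set d := b.+1 - a; set C2 := 'C(b.+2, a.+1) => H H2.
have h3 := leq_mul (leq_mul H H2) (leqnn C2).
apply: leq_trans h3 _; rewrite (mulnC b.+2) mulnA (mulnC t) -!mulnA leq_mul2l; apply/orP; right.
by rewrite mulnCA.
Qed.

Lemma bin_iter n t k : forall a b,
  (forall l, l < k -> n * (a + l).+1 <= t * (b + 2 * l).+1) ->
  n ^ k * 'C(b, a) <= t ^ k * 'C(b + 2 * k, a + k).
Proof.
elim: k => [|k IH] a b H; first by rewrite !expn0 !mul1n addn0 muln0 addn0.
have H1 : n * 'C(b, a) <= t * 'C(b.+2, a.+1).
  by apply: bin_step; have := H 0 (ltn0Sn k); rewrite !addn0.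
have H2 : n ^ k * 'C(b.+2, a.+1) <= t ^ k * 'C(b.+2 + 2 * k, a.+1 + k).
  apply: IH => l hl; have := H l.+1 hl.
  have -> : a.+1 + l = a + l.+1 by lia.
  by have -> : b.+2 + 2 * l = b + 2 * l.+1 by lia.
have -> : b + 2 * k.+1 = b.+2 + 2 * k by lia.
have -> : a + k.+1 = a.+1 + k by lia.
rewrite expnS (mulnC n) -mulnA; apply: leq_trans (leq_mul (leqnn _) H1) _.
rewrite mulnCA expnS -mulnA leq_mul2l; apply/orP; right; exact: H2.
Qed.

Lemma V_ratio q n t k : 2 * t <= n -> 2 * k + 1 <= n -> k + 1 <= t ->
  ((q - 1) * n) ^ k * Vq q (n - (2 * k + 1)) (t - k - 1) <= t ^ k * Vq q (n - 1) (t - 1).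
Proof.
move=> H2t Hkn Hkt.
set b := n - (2 * k + 1); set s' := t - k - 1.
pose F j := 'C(n - 1, j) * (q - 1) ^ j.
apply: (@leq_trans (t ^ k * \sum_(0 <= j < s'.+1) F (j + k))).
  rewrite /Vq !big_distrr /= !big_mkord; apply: leq_sum => j _.
  have Hj := ltn_ord j; move: Hj; rewrite /s'; move: (nat_of_ord j) => {}j Hj.
  have Hb : n ^ k * 'C(b, j) <= t ^ k * 'C(b + 2 * k, j + k).
    apply: bin_iter => l hl.
    have h1 : (j + l).+1 <= t - (k - l) by lia.
    have h2 : t * (2 * (k - l)) <= n * (k - l) by rewrite mulnA (mulnC t) leq_mul2r H2t orbT.
    apply: (@leq_trans (n * (t - (k - l)))); first by rewrite leq_mul2l h1 orbT.
    have h3 : k - l <= t by lia.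
    have -> : (b + 2 * l).+1 = n - 2 * (k - l) by rewrite /b; lia.
    rewrite !mulnBr; lia.
  have E : b + 2 * k = n - 1 by rewrite /b; lia.
  rewrite E in Hb.
  rewrite /F expnMn expnD; move: Hb.
  set A := (q - 1) ^ j; set B := (q - 1) ^ k; set X := n ^ k; set Y := t ^ k.
  set C0 := 'C(b, j); set C1 := 'C(n - 1, j + k) => Hb.
  have := leq_mul (leqnn (A * B)) Hb.
  have -> : B * X * (C0 * A) = A * B * (X * C0) by nia.
  have -> : Y * (C1 * (A * B)) = A * B * (Y * C1) by nia.
  done.
rewrite leq_mul2l; apply/orP; right.
have -> : Vq q (n - 1) (t - 1) = \sum_(0 <= j < t) F j.
  by rewrite /Vq; have -> : (t - 1).+1 = t by lia.
have Hk : k <= t by lia.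
rewrite [X in _ <= X](@big_cat_nat _ _ _ k) //=.
have -> : \sum_(k <= j < t) F j = \sum_(0 <= j < s'.+1) F (j + k).
  rewrite -{1}[k]add0n big_addn; congr (\sum_(0 <= j < _) _); rewrite /s'; lia.
exact: leq_addl.
Qed.

Lemma V_W1 q n t : 0 < n -> 0 < t -> (q - 1) * n * Vq q (n - 1) (t - 1) <= t * Vq q n t.
Proof.
move=> Hn Ht; rewrite /Vq.
have -> : (t - 1).+1 = t by lia.
rewrite big_distrr /= [X in _ <= t * X]big_nat_recl //= mulnDr big_distrr /=.
apply: (@leq_trans (\sum_(0 <= j < t) t * ('C(n, j.+1) * (q - 1) ^ j.+1))); last first.
  by rewrite leq_addl.
rewrite !big_mkord; apply: leq_sum => j _; have Hj := ltn_ord j.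
have E := mul_bin_diag n j.
have -> : (q - 1) * n * ('C(n - 1, j) * (q - 1) ^ j) = (n * 'C(n.-1, j)) * (q - 1) ^ j.+1.
  rewrite expnS -subn1; nia.
rewrite E -mulnA leq_mul2r; apply/orP; right; exact: Hj.
Qed.

Unset Implicit Arguments. Set Strict Implicit. Set Printing Implicit Defensive.
Local Open Scope ring_scope.

Lemma le_div (R : numFieldType) (a b N D : nat) : (0 < D)%N -> (a * D <= N * b)%N ->
  (a%:R : R) <= N%:R / D%:R * b%:R.
Proof. by move=> HD H; rewrite mulrAC ler_pdivlMr ?ltr0n // -!natrM ler_nat. Qed.

Theorem lemma3p4 (R : rcfType) (q n t k : nat) :
  (2 <= q)%N -> (0 < n)%N -> (0 < t)%N ->
  (t%:R : R) <= 10 * Num.sqrt (n%:R) ->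
  (2 * k + 2 <= n)%N ->
  let c : R := (q ^ 2 * t)%:R / ((q - 1) * n)%:R in
  [/\ (Wq q n t (2 * k + 2))%:R <= (Wq q n t (2 * k + 1))%:R :> R,
      (Wq q n t (2 * k + 1))%:R <= 2 * c ^+ k * (Wq q n t 1)%:R
    & 2 * c ^+ k * (Wq q n t 1)%:R <= 2 * c ^+ k.+1 * (Vq q n t)%:R].
Proof.
move=> Hq Hn Ht _ Hk c.
have HD : (0 < (q - 1) * n)%N by rewrite muln_gt0 Hn subn_gt0 andbT.
have c0 : 0 <= c by rewrite divr_ge0 ?ler0n.
have ck0 : 0 <= c ^+ k by rewrite exprn_ge0.
have HW1 := W1_eq Hq Hn Ht.
have W1cV : (Wq q n t 1)%:R <= c * (Vq q n t)%:R.
  apply: le_div => //; rewrite HW1.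
  have := V_W1 q Hn Ht => h.
  have hq : (q <= q ^ 2)%N by rewrite expnS expn1 leq_pmulr //; lia.
  apply: (@leq_trans (q * (t * Vq q n t))).
    by rewrite -mulnA leq_mul2l mulnC h orbT.
  by rewrite mulnA leq_mul2r leq_mul2r hq !orbT.
split.
- rewrite ler_nat; have -> : (2 * k + 2 = (2 * k + 1).+1)%N by lia.
  by apply: Wmono => //; lia.
- have ckE : c ^+ k = ((q ^ 2 * t) ^ k)%:R / (((q - 1) * n) ^ k)%:R.
    by rewrite expr_div_n !natrX.
  case: (leqP ((q - 1) * n) (q ^ 2 * t)) => Hc.
    have c1 : 1 <= c by rewrite ler_pdivlMr ?ltr0n // mul1r ler_nat.
    have h1 : ((Wq q n t (2 * k + 1))%:R : R) <= (Wq q n t 1)%:R.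
      by rewrite ler_nat; apply: Wmono_le => //; lia.
    apply: (le_trans h1); apply: ler_peMl => //.
    have h2 : 1 <= c ^+ k by apply: exprn_ege1.
    apply: (le_trans h2); rewrite ler_peMl //.
    by rewrite ler1n.
  have H2t : (2 * t < n)%N.
    have h : (2 * (q - 1) * t <= q ^ 2 * t)%N.
      rewrite leq_mul2r; apply/orP; right; rewrite expnS expn1; nia.
    have h' : ((q - 1) * (2 * t) < (q - 1) * n)%N by apply: leq_ltn_trans Hc; rewrite mulnCA mulnA.
    by rewrite ltn_pmul2l in h'; lia.
  suff h : (Wq q n t (2 * k + 1))%:R <= c ^+ k * (Wq q n t 1)%:R.
    by apply: le_trans h _; rewrite -mulrA ler_peMl // ?mulr_ge0 // ler1n.
  case: (leqP (k + 1) t) => Hkt; last first.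
    by rewrite (@Wzero q n t (2 * k + 1)) //; [rewrite mulr_ge0 | lia | lia].
  have hup := @Wup q n t k Hq ltac:(lia).
  have hr := @V_ratio q n t k (ltnW H2t) ltac:(lia) Hkt.
  rewrite ckE; apply: le_div; first by rewrite expn_gt0 HD.
  apply: leq_trans (leq_mul hup (leqnn _)) _.
  rewrite HW1 [((q ^ 2 * t) ^ k)%N]expnMn -expnM expnD expn1; move: hr.
  set A := Vq q (n - (2 * k + 1))%N (t - k - 1)%N; set B := Vq q (n - 1)%N (t - 1)%N.
  set D := (((q - 1) * n) ^ k)%N; set Q := (q ^ (2 * k))%N; set T := (t ^ k)%N => hr.
  have -> : (Q * q * A * D = (Q * q) * (D * A))%N by nia.
  have -> : (Q * T * (q * B) = (Q * q) * (T * B))%N by nia.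
  by rewrite leq_mul2l hr orbT.
- rewrite exprSr -!mulrA; apply: ler_wpM2l => //.
  by apply: ler_wpM2l => //; rewrite mulrA.
Qed.
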